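(* Let $\Bbbk$ be a field of characteristic zero. The algebra $A=\Bbbk[x_1,x_2,x_3,x_4,x_5]/(x_1^4,x_2^4,x_3^4,x_4^4,x_5^4,x_1 x_2 x_3 x_4)$ fails the WLP by injectivity in degree $6$.
   Context: $\mathrm{HF}(A,k)=\dim_\Bbbk A_k$. $A$ fails the WLP by injectivity in degree $i$ if $\mathrm{HF}(A,i)\le\mathrm{HF}(A,i+1)$ and $\times(x_1+\cdots+x_5): A_i\to A_{i+1}$ is not injective. *)

(* Defs.v *)
From HB Require Import structures.
From mathcomp Require Import all_boot all_algebra.
From mathcomp Require Export mpoly.
Set Implicit Arguments. Unset Strict Implicit. Unset Printing Implicit Defensive.
Import GRing.Theory.
Local Open Scope ring_scope.

(* Polynomial ring S = k[x_1..x_n] is {mpoly R[n]}; variables x_{i+1} = 'X_i. *)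

Definition in_ideal (R : fieldType) (n m : nat) (gs : 'I_m -> {mpoly R[n]})
  (p : {mpoly R[n]}) : Prop :=
  exists g : 'I_m -> {mpoly R[n]}, p = \sum_(j < m) g j * gs j.

(* HF(S/(gs), d) = N : the degree-d component (S/I)_d = S_d / I_d has a basis
   of size N, i.e. there are N homogeneous degree-d polynomials whose classes
   are linearly independent modulo I and span S_d modulo I. *)
Definition HF_is (R : fieldType) (n m : nat) (gs : 'I_m -> {mpoly R[n]})
  (d N : nat) : Prop :=
  exists b : 'I_N -> {mpoly R[n]},
    [/\ forall i, b i \is d.-homog,
        forall c : 'I_N -> R,
          in_ideal gs (\sum_(i < N) c i *: b i) -> forall i, c i = 0
      & forall p : {mpoly R[n]}, p \is d.-homog ->
          exists c : 'I_N -> R, in_ideal gs (p - \sum_(i < N) c i *: b i)].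

Definition mult_not_injective (R : fieldType) (n m : nat)
  (gs : 'I_m -> {mpoly R[n]}) (l : {mpoly R[n]}) (i : nat) : Prop :=
  exists f : {mpoly R[n]},
    [/\ f \is i.-homog, ~ in_ideal gs f & in_ideal gs (l * f)].

Definition fails_WLP_by_injectivity (R : fieldType) (n m : nat)
  (gs : 'I_m -> {mpoly R[n]}) (i : nat) : Prop :=
  exists N1 N2 : nat,
    [/\ HF_is gs i N1, HF_is gs i.+1 N2, (N1 <= N2)%N
      & mult_not_injective gs (\sum_(j < n) 'X_j) i].

Definition gens_5p9 (R : fieldType) : 'I_6 -> {mpoly R[5]} :=
  fun j => if (j < 5)%N then 'X_(inord j) ^+ 4
           else 'X_(inord 0) * 'X_(inord 1) * 'X_(inord 2) * 'X_(inord 3).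

(* Main.v *)
Require Import Defs.
From HB Require Import structures.
From mathcomp Require Import all_boot all_algebra.
From mathcomp Require Import mpoly.
Set Implicit Arguments. Unset Strict Implicit. Unset Printing Implicit Defensive.
Import GRing.Theory.
Local Open Scope ring_scope.


Definition mon (t : seq nat) : 'X_{1..5} := [multinom nth 0%N t i | i < 5].
Definition listof (m : 'X_{1..5}) : seq nat := tval (multinom_val m).

Lemma size_listof m : size (listof m) = 5%N.
Proof. exact: size_tuple. Qed.

Lemma nth_listof m (i : 'I_5) : nth 0%N (listof m) i = m i.
Proof. by rewrite (mnm_nth 0%N). Qed.

Lemma monK m : mon (listof m) = m.
Proof. by apply/mnmP => i; rewrite mnmE nth_listof. Qed.

Lemma listofK t : size t = 5%N -> listof (mon t) = t.
Proof.
move=> st; apply: (@eq_from_nth _ 0%N); first by rewrite size_listof st.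
move=> i; rewrite size_listof => hi.
by rewrite (nth_listof (mon t) (Ordinal hi)) mnmE.
Qed.

Lemma mon_eq a b : size a = 5%N -> size b = 5%N -> (mon a == mon b) = (a == b).
Proof.
move=> sa sb; apply/eqP/eqP => [h|->] //.
by rewrite -(listofK sa) -(listofK sb) h.
Qed.

Lemma mdeg_listof m : mdeg m = sumn (listof m).
Proof. by rewrite /mdeg sumnE. Qed.

Lemma mdeg_mon t : size t = 5%N -> mdeg (mon t) = sumn t.
Proof. by move=> st; rewrite mdeg_listof listofK. Qed.

Fixpoint boxn k : seq (seq nat) :=
  if k is k'.+1 then [seq x :: t | x <- iota 0 4, t <- boxn k'] else [:: [::]].
Definition box := boxn 5.

Lemma mem_boxn k t : (t \in boxn k) = (size t == k) && all (fun e => e < 4)%N t.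
Proof.
elim: k t => [|k IH] [|x t] //.
- by apply/negbTE/allpairsP => -[[a u] /= [_ _]].
- change (boxn k.+1) with [seq x :: t | x <- iota 0 4, t <- boxn k].
apply/allpairsP/idP => [[[a u] /= [ha hu [-> ->]]]|].
  rewrite eqSS; move: hu; rewrite IH => /andP[-> ->].
  by move: ha; case: a => [|[|[|[|a]]]].
rewrite /= eqSS => /andP [hs /andP [hx ht]]; exists (x, t) => /=; split=> //.
  by case: x hx => [|[|[|[|a]]]].
by rewrite IH hs.
Qed.


Definition gm (j : 'I_6) : 'X_{1..5} :=
  if (j < 5)%N then (U_(inord j) *+ 4)%MM
  else (U_(inord 0) + U_(inord 1) + U_(inord 2) + U_(inord 3))%MM.

Lemma gensE (R : fieldType) j : gens_5p9 R j = 'X_[gm j].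
Proof. by rewrite /gens_5p9 /gm; case: ifP => _; rewrite ?mpolyXn ?mpolyXD. Qed.

Lemma gm_small (j : 'I_6) (h : (j < 5)%N) : gm j = (U_(Ordinal h) *+ 4)%MM.
Proof. by rewrite /gm h; congr (U_(_) *+ _)%MM; apply/val_inj; rewrite /= inordK. Qed.

Lemma gm_big (j : 'I_6) : ~~ (j < 5)%N -> forall k : 'I_5, gm j k = (k < 4)%N.
Proof.
move=> h k; rewrite /gm (negbTE h) !mnmDE !mnm1E.
case: k => [[|[|[|[|[|k]]]]] hk] //=;
  by rewrite -!val_eqE /= ?inordK.
Qed.

Definition stdl (t : seq nat) : bool :=
  all (fun e => e < 4)%N t &&
  ~~ [&& 0 < nth 0 t 0, 0 < nth 0 t 1, 0 < nth 0 t 2 & 0 < nth 0 t 3]%N.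

Definition nonstd (m : 'X_{1..5}) := [exists j : 'I_6, (gm j <= m)%MM].

Lemma nth_listof' m i (hi : (i < 5)%N) : nth 0%N (listof m) i = m (Ordinal hi).
Proof. exact: (nth_listof m (Ordinal hi)). Qed.

Lemma stdE m : ~~ nonstd m = stdl (listof m).
Proof.
apply/idP/idP.
  move=> /existsPn H; apply/andP; split.
    apply/(all_nthP 0%N) => i; rewrite size_listof => hi.
    rewrite (nth_listof' m hi) ltnNge; apply/negP=> h4.
    have hw : (widen_ord (leqnSn 5) (Ordinal hi) < 5)%N by [].
    have := H (widen_ord (leqnSn 5) (Ordinal hi)); rewrite (gm_small hw).
    apply/negP/negPn/mnm_lepP => k; rewrite mulmnE mnm1E.
    case: eqP => [<-|]; rewrite ?mul1n ?mul0n //.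
    by rewrite (_ : Ordinal hw = Ordinal hi) //; apply/val_inj.
  apply/negP => /and4P[h0 h1 h2 h3].
  have := H ord_max; apply/negP/negPn/mnm_lepP => k.
  rewrite gm_big //; case: k => [k hk]; rewrite -(nth_listof' m hk).
  by case: k hk => [|[|[|[|k]]]] hk.
move=> /andP[hall hn]; apply/existsPn => j; apply/negP => /mnm_lepP hle.
case: (ltnP j 5) => hj.
  have := hle (Ordinal hj); rewrite (gm_small hj) mulmnE mnm1E eqxx mul1n.
  rewrite -(nth_listof' m hj) leqNgt.
  by move/(all_nthP 0%N): hall => ->; rewrite // size_listof.
have hj' : ~~ (j < 5)%N by rewrite -leqNgt.
move/negP: hn; apply; apply/and4P; split.
- by have := hle (@Ordinal 5 0 isT); rewrite gm_big // (nth_listof' m (isT : (0 < 5)%N)).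
- by have := hle (@Ordinal 5 1 isT); rewrite gm_big // (nth_listof' m (isT : (1 < 5)%N)).
- by have := hle (@Ordinal 5 2 isT); rewrite gm_big // (nth_listof' m (isT : (2 < 5)%N)).
- by have := hle (@Ordinal 5 3 isT); rewrite gm_big // (nth_listof' m (isT : (3 < 5)%N)).
Qed.


Section Ideal.
Variable R : fieldType.

Lemma coef_ideal (p : {mpoly R[5]}) :
  in_ideal (gens_5p9 R) p -> forall mm, ~~ nonstd mm -> p@_mm = 0.
Proof.
case=> g ->; move=> mm hs; rewrite raddf_sum big1 // => j _.
rewrite gensE; apply/memN_msupp_eq0; rewrite (perm_mem (msuppMX _ _)).
apply/negP => /mapP [m' _ e]; move/negP: hs; apply; apply/existsP; exists j.
rewrite e; exact: lem_addr.
Qed.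

Lemma ideal_coef (p : {mpoly R[5]}) :
  (forall mm, ~~ nonstd mm -> p@_mm = 0) -> in_ideal (gens_5p9 R) p.
Proof.
move=> H.
pose pk (mm : 'X_{1..5}) := [pick j | gm j <= mm]%MM.
exists (fun j => \sum_(mm <- msupp p | pk mm == Some j) p@_mm *: 'X_[mm - gm j]).
have -> : \sum_(j < 6) (\sum_(mm <- msupp p | pk mm == Some j)
      p@_mm *: 'X_[mm - gm j]) * gens_5p9 R j
    = \sum_(mm <- msupp p) p@_mm *: 'X_[mm]; last exact: mpolyE.
rewrite (eq_bigr (fun j => \sum_(mm <- msupp p)
   (if pk mm == Some j then p@_mm *: 'X_[mm] else 0))); last first.
  move=> j _; rewrite gensE big_distrl /= big_mkcond; apply: eq_bigr => mm _.
  case: ifP => // /eqP e; rewrite -scalerAl -mpolyXD submK //.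
  by move: e; rewrite /pk; case: pickP => // j' hj' [<-].
rewrite exchange_big; apply: eq_big_seq => mm hmm.
case e: (pk mm) => [j0|].
  rewrite (bigD1 j0) //= eqxx big1 ?addr0 // => j hj.
  by case: eqP => // -[e']; rewrite e' eqxx in hj.
rewrite big1 // ; move: e; rewrite /pk; case: pickP => // hn _.
rewrite H ?scale0r //; apply/existsPn => j; by rewrite hn.
Qed.

End Ideal.


Definition Sd d := [seq t <- box | stdl t && (sumn t == d)].

Lemma uniq_box : uniq box. Proof. by vm_compute. Qed.

Lemma mem_Sd d t : (t \in Sd d) = [&& size t == 5%N, stdl t & sumn t == d].
Proof.
rewrite mem_filter mem_boxn; apply/idP/idP.
  by case/andP => /andP[hs hd] /andP[sz _]; rewrite sz hs hd.
by case/and3P => sz hs hd; rewrite hs hd sz /=; case/andP: hs.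
Qed.

Section HF.
Variable R : fieldType.

Lemma HF_std d : HF_is (gens_5p9 R) d (size (Sd d)).
Proof.
set L := Sd d.
have uL : uniq L by apply: filter_uniq; exact: uniq_box.
have hL : forall i : 'I_(size L), [&& size (nth [::] L i) == 5%N,
     stdl (nth [::] L i) & sumn (nth [::] L i) == d].
  by move=> i; rewrite -mem_Sd mem_nth.
have neq : forall i k : 'I_(size L), k != i ->
    (mon (nth [::] L k) == mon (nth [::] L i)) = false.
  move=> i k hk; have /and3P[/eqP si _ _] := hL i; have /and3P[/eqP sk _ _] := hL k.
  by rewrite mon_eq // nth_uniq //; apply/negbTE.
exists (fun i => 'X_[R, mon (nth [::] L i)]); split.
- move=> i; rewrite dhomogX; have /and3P[/eqP si _ /eqP sd] := hL i.
  by apply/eqP; rewrite -sd; exact: mdeg_mon.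
- move=> c hI i; have /and3P[/eqP si st _] := hL i.
  have := @coef_ideal R _ hI (mon (nth [::] L i)); rewrite stdE listofK // => /(_ st).
  rewrite raddf_sum (bigD1 i) //= mcoeffZ mcoeffX eqxx mulr1 big1 ?addr0 // => k hk.
  by rewrite mcoeffZ mcoeffX neq // mulr0.
move=> p hp; exists (fun i => p@_(mon (nth [::] L i))).
apply: ideal_coef => mm; rewrite stdE => hs.
rewrite mcoeffB raddf_sum /=.
case: (boolP (listof mm \in L)) => htL.
  have hi : (index (listof mm) L < size L)%N by rewrite index_mem.
  rewrite (bigD1 (Ordinal hi)) //= mcoeffZ mcoeffX nth_index // monK eqxx mulr1.
  rewrite big1 ?addr0 ?subrr // => k hk; rewrite mcoeffZ mcoeffX.
  have e : mm = mon (nth [::] L (Ordinal hi)) by rewrite /= nth_index // monK.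
  by rewrite e neq // mulr0.
rewrite big1 ?subr0.
  apply: (dhomog_nemf_coeff hp); apply: contra htL => /eqP hd.
  have hd' : mdeg mm = d := hd.
  by rewrite mem_Sd size_listof hs -hd' mdeg_listof !eqxx.
move=> k _; rewrite mcoeffZ mcoeffX; case: eqP => [e|]; last by rewrite mulr0.
by move: htL; rewrite -e listofK ?mem_nth //; have /and3P[/eqP -> _ _] := hL k.
Qed.

End HF.


Definition Fl : seq (seq nat * int) := [::
  ([:: 0;0;0;3;3], 6%:Z);
  ([:: 0;0;1;2;3], (- 3%:Z));
  ([:: 0;0;1;3;2], (- 3%:Z));
  ([:: 0;0;2;1;3], (- 3%:Z));
  ([:: 0;0;2;2;2], 6%:Z);
  ([:: 0;0;2;3;1], (- 3%:Z));
  ([:: 0;0;3;0;3], 6%:Z);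
  ([:: 0;0;3;1;2], (- 3%:Z));
  ([:: 0;0;3;2;1], (- 3%:Z));
  ([:: 0;0;3;3;0], 6%:Z);
  ([:: 0;1;0;2;3], (- 3%:Z));
  ([:: 0;1;0;3;2], (- 3%:Z));
  ([:: 0;1;1;1;3], 8%:Z);
  ([:: 0;1;1;2;2], (- 2%:Z));
  ([:: 0;1;1;3;1], 8%:Z);
  ([:: 0;1;2;0;3], (- 3%:Z));
  ([:: 0;1;2;1;2], (- 2%:Z));
  ([:: 0;1;2;2;1], (- 2%:Z));
  ([:: 0;1;2;3;0], (- 3%:Z));
  ([:: 0;1;3;0;2], (- 3%:Z));
  ([:: 0;1;3;1;1], 8%:Z);
  ([:: 0;1;3;2;0], (- 3%:Z));
  ([:: 0;2;0;1;3], (- 3%:Z));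
  ([:: 0;2;0;2;2], 6%:Z);
  ([:: 0;2;0;3;1], (- 3%:Z));
  ([:: 0;2;1;0;3], (- 3%:Z));
  ([:: 0;2;1;1;2], (- 2%:Z));
  ([:: 0;2;1;2;1], (- 2%:Z));
  ([:: 0;2;1;3;0], (- 3%:Z));
  ([:: 0;2;2;0;2], 6%:Z);
  ([:: 0;2;2;1;1], (- 2%:Z));
  ([:: 0;2;2;2;0], 6%:Z);
  ([:: 0;2;3;0;1], (- 3%:Z));
  ([:: 0;2;3;1;0], (- 3%:Z));
  ([:: 0;3;0;0;3], 6%:Z);
  ([:: 0;3;0;1;2], (- 3%:Z));
  ([:: 0;3;0;2;1], (- 3%:Z));
  ([:: 0;3;0;3;0], 6%:Z);
  ([:: 0;3;1;0;2], (- 3%:Z));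
  ([:: 0;3;1;1;1], 8%:Z);
  ([:: 0;3;1;2;0], (- 3%:Z));
  ([:: 0;3;2;0;1], (- 3%:Z));
  ([:: 0;3;2;1;0], (- 3%:Z));
  ([:: 0;3;3;0;0], 6%:Z);
  ([:: 1;0;0;2;3], (- 3%:Z));
  ([:: 1;0;0;3;2], (- 3%:Z));
  ([:: 1;0;1;1;3], 8%:Z);
  ([:: 1;0;1;2;2], (- 2%:Z));
  ([:: 1;0;1;3;1], 8%:Z);
  ([:: 1;0;2;0;3], (- 3%:Z));
  ([:: 1;0;2;1;2], (- 2%:Z));
  ([:: 1;0;2;2;1], (- 2%:Z));
  ([:: 1;0;2;3;0], (- 3%:Z));
  ([:: 1;0;3;0;2], (- 3%:Z));
  ([:: 1;0;3;1;1], 8%:Z);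
  ([:: 1;0;3;2;0], (- 3%:Z));
  ([:: 1;1;0;1;3], 8%:Z);
  ([:: 1;1;0;2;2], (- 2%:Z));
  ([:: 1;1;0;3;1], 8%:Z);
  ([:: 1;1;1;0;3], 8%:Z);
  ([:: 1;1;2;0;2], (- 2%:Z));
  ([:: 1;1;3;0;1], 8%:Z);
  ([:: 1;2;0;0;3], (- 3%:Z));
  ([:: 1;2;0;1;2], (- 2%:Z));
  ([:: 1;2;0;2;1], (- 2%:Z));
  ([:: 1;2;0;3;0], (- 3%:Z));
  ([:: 1;2;1;0;2], (- 2%:Z));
  ([:: 1;2;2;0;1], (- 2%:Z));
  ([:: 1;2;3;0;0], (- 3%:Z));
  ([:: 1;3;0;0;2], (- 3%:Z));
  ([:: 1;3;0;1;1], 8%:Z);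
  ([:: 1;3;0;2;0], (- 3%:Z));
  ([:: 1;3;1;0;1], 8%:Z);
  ([:: 1;3;2;0;0], (- 3%:Z));
  ([:: 2;0;0;1;3], (- 3%:Z));
  ([:: 2;0;0;2;2], 6%:Z);
  ([:: 2;0;0;3;1], (- 3%:Z));
  ([:: 2;0;1;0;3], (- 3%:Z));
  ([:: 2;0;1;1;2], (- 2%:Z));
  ([:: 2;0;1;2;1], (- 2%:Z));
  ([:: 2;0;1;3;0], (- 3%:Z));
  ([:: 2;0;2;0;2], 6%:Z);
  ([:: 2;0;2;1;1], (- 2%:Z));
  ([:: 2;0;2;2;0], 6%:Z);
  ([:: 2;0;3;0;1], (- 3%:Z));
  ([:: 2;0;3;1;0], (- 3%:Z));
  ([:: 2;1;0;0;3], (- 3%:Z));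
  ([:: 2;1;0;1;2], (- 2%:Z));
  ([:: 2;1;0;2;1], (- 2%:Z));
  ([:: 2;1;0;3;0], (- 3%:Z));
  ([:: 2;1;1;0;2], (- 2%:Z));
  ([:: 2;1;2;0;1], (- 2%:Z));
  ([:: 2;1;3;0;0], (- 3%:Z));
  ([:: 2;2;0;0;2], 6%:Z);
  ([:: 2;2;0;1;1], (- 2%:Z));
  ([:: 2;2;0;2;0], 6%:Z);
  ([:: 2;2;1;0;1], (- 2%:Z));
  ([:: 2;2;2;0;0], 6%:Z);
  ([:: 2;3;0;0;1], (- 3%:Z));
  ([:: 2;3;0;1;0], (- 3%:Z));
  ([:: 2;3;1;0;0], (- 3%:Z));
  ([:: 3;0;0;0;3], 6%:Z);
  ([:: 3;0;0;1;2], (- 3%:Z));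
  ([:: 3;0;0;2;1], (- 3%:Z));
  ([:: 3;0;0;3;0], 6%:Z);
  ([:: 3;0;1;0;2], (- 3%:Z));
  ([:: 3;0;1;1;1], 8%:Z);
  ([:: 3;0;1;2;0], (- 3%:Z));
  ([:: 3;0;2;0;1], (- 3%:Z));
  ([:: 3;0;2;1;0], (- 3%:Z));
  ([:: 3;0;3;0;0], 6%:Z);
  ([:: 3;1;0;0;2], (- 3%:Z));
  ([:: 3;1;0;1;1], 8%:Z);
  ([:: 3;1;0;2;0], (- 3%:Z));
  ([:: 3;1;1;0;1], 8%:Z);
  ([:: 3;1;2;0;0], (- 3%:Z));
  ([:: 3;2;0;0;1], (- 3%:Z));
  ([:: 3;2;0;1;0], (- 3%:Z));
  ([:: 3;2;1;0;0], (- 3%:Z));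
  ([:: 3;3;0;0;0], 6%:Z)].

Definition coefL (F : seq (seq nat * int)) (t : seq nat) : int :=
  foldr (fun x acc => x.2 * (x.1 == t)%:Z + acc) 0 F.
Definition size5 (F : seq (seq nat * int)) := all (fun x => size x.1 == 5%N) F.
Definition shiftn (j : nat) (F : seq (seq nat * int)) :=
  [seq (incr_nth x.1 j, x.2) | x <- F].
Definition cL (t : seq nat) : int :=
  coefL (shiftn 0 Fl) t + coefL (shiftn 1 Fl) t + coefL (shiftn 2 Fl) t
  + coefL (shiftn 3 Fl) t + coefL (shiftn 4 Fl) t.

Lemma check_ker : all (fun t => stdl t ==> (cL t == 0)) box.
Proof. by vm_compute. Qed.
Lemma check_F : all (fun x => (size x.1 == 5%N) && (sumn x.1 == 6%N)) Fl.
Proof. by vm_compute. Qed.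
Lemma check_c : coefL Fl [:: 3; 3; 0; 0; 0]%N = 6.
Proof. by vm_compute. Qed.
Lemma check_sizes : (size (Sd 6) <= size (Sd 7))%N.
Proof. by vm_compute. Qed.


Section Ker.
Variable R : fieldType.

Definition polyL (F : seq (seq nat * int)) : {mpoly R[5]} :=
  \sum_(x <- F) (x.2)%:~R *: 'X_[mon x.1].

Lemma coef_polyL F mm : size5 F -> (polyL F)@_mm = (coefL F (listof mm))%:~R.
Proof.
elim: F => [|x F IH] /=; first by rewrite /polyL big_nil mcoeff0.
case/andP => /eqP sx hF.
rewrite /polyL big_cons mcoeffD -/(polyL F) IH // mcoeffZ mcoeffX.
rewrite -{1}(monK mm) mon_eq ?size_listof //.
by rewrite rmorphD rmorphM /= -pmulrn.
Qed.

Lemma polyL_homog F d : all (fun x => (size x.1 == 5%N) && (sumn x.1 == d)) F ->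
  polyL F \is d.-homog.
Proof.
move=> /allP hF; rewrite /polyL big_seq; apply: rpred_sum => x hx; apply: rpredZ.
rewrite dhomogX; have /andP[/eqP s5 /eqP sd] := hF x hx.
by apply/eqP; rewrite -sd; exact: mdeg_mon.
Qed.

Lemma size5_shift (j : 'I_5) F : size5 F -> size5 (shiftn j F).
Proof.
move=> /allP hF; apply/allP => y /mapP [x hx ->] /=.
by rewrite size_incr_nth (eqP (hF x hx)) ltn_ord.
Qed.

Lemma XpolyL (j : 'I_5) F : 'X_j * polyL F = polyL (shiftn j F).
Proof.
rewrite /polyL big_map mulr_sumr; apply: eq_bigr => x _ /=.
rewrite -scalerAr -mpolyXD; congr (_ *: 'X_[_]); apply/mnmP => i.
by rewrite mnmDE !mnmE nth_incr_nth.
Qed.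

End Ker.

Lemma sum5 (G : nat -> int) :
  \sum_(j < 5) G j = G 0%N + G 1%N + G 2%N + G 3%N + G 4%N.
Proof. by rewrite !big_ord_recl big_ord0 addr0 !addrA. Qed.

Theorem lemma5p9 (R : fieldType) (charR0 : [pchar R] =i pred0) :
  fails_WLP_by_injectivity (gens_5p9 R) 6.
Proof.
have F5 : size5 Fl.
  by apply/allP => x /(allP check_F) /andP[].
exists (size (Sd 6)), (size (Sd 7)); split.
- exact: HF_std.
- exact: HF_std.
- exact: check_sizes.
exists (polyL R Fl); split.
- exact: polyL_homog check_F.
- move=> hI.
  have t5 : size [:: 3; 3; 0; 0; 0]%N = 5%N by [].
  have := @coef_ideal R _ hI (mon [:: 3; 3; 0; 0; 0]%N).
  rewrite stdE listofK // => /(_ isT).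
  rewrite coef_polyL // listofK // check_c.
  move/eqP; rewrite -pmulrn.
  by move/pcharf0P: charR0 => ->.
apply: ideal_coef => mm; rewrite stdE => hs.
rewrite mulr_suml raddf_sum /=.
under eq_bigr => j _ do rewrite XpolyL coef_polyL ?size5_shift //.
rewrite -rmorph_sum.
have -> : \sum_(j < 5) coefL (shiftn j Fl) (listof mm) = cL (listof mm).
  exact: (sum5 (fun j => coefL (shiftn j Fl) (listof mm))).
have hb : listof mm \in box.
  by rewrite /box mem_boxn size_listof; case/andP: hs.
by have := allP check_ker _ hb; rewrite hs => /eqP ->.
Qed.
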